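(* For all integers $d\ge 2$ and $n\ge 1$, every Latin hypercuboid in $\mathrm{LHC}(d,n,1)$ is completable. Consequently $\mathrm{NC}_d(n)\ge 2$ whenever it is defined.
   Context: $[n]=\{1,\dots,n\}$. For integers $d\ge2$ and $1\le k\le n$, $\mathrm{LHC}(d,n,k)$ denotes the set of $d$-dimensional arrays of dimensions $n\times\cdots\times n\times k$ (the last coordinate ranging over $[k]$, the others over $[n]$) with entries from $[n]$ such that each symbol occurs at most once in each axis-parallel line (a set of cells obtained by fixing all coordinates but one). A hypercuboid $H\in\mathrm{LHC}(d,n,k)$ is completable if it is contained in (i.e. equals the restriction to the first $k$ values of the last coordinate of) some array in $\mathrm{LHC}(d,n,n)$ (a Latin hypercube). $\mathrm{NC}_d(n)$ denotes the smallest $k$ such that some hypercuboid in $\mathrm{LHC}(d,n,k)$ is not completable. *)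

(* Defs.v *)
From mathcomp Require Import all_boot.
Set Implicit Arguments. Unset Strict Implicit. Unset Printing Implicit Defensive.

(* A cell of an n x ... x n x k array of dimension d: the first d-1
   coordinates range over 'I_n (a finite function 'I_(d-1) -> 'I_n),
   the last coordinate ranges over 'I_k. *)
Definition cell (d n k : nat) := ({ffun 'I_d.-1 -> 'I_n} * 'I_k)%type.

Definition array (d n k : nat) := cell d n k -> 'I_n.

Definition is_LHC (d n k : nat) (H : array d n k) : Prop :=
  (forall (x : {ffun 'I_d.-1 -> 'I_n}) (t t' : 'I_k),
      H (x, t) = H (x, t') -> t = t') /\
  (forall (i : 'I_d.-1) (x y : {ffun 'I_d.-1 -> 'I_n}) (t : 'I_k),
      (forall j : 'I_d.-1, j != i -> x j = y j) ->
      H (x, t) = H (y, t) -> x = y).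

Definition completable (d n k : nat) (H : array d n k) : Prop :=
  exists L : array d n n, is_LHC L /\
    forall (x : {ffun 'I_d.-1 -> 'I_n}) (t : 'I_k) (t' : 'I_n),
      nat_of_ord t = nat_of_ord t' -> H (x, t) = L (x, t').

(* Main.v *)
Require Import Defs.
From mathcomp Require Import all_boot.

Lemma compl_small (d n k : nat) (hn : 0 < n) (hk : 0 < k) (hk1 : k <= 1)
  (H : array d n k) : is_LHC H -> completable H.
Proof.
move=> [_ HL].
pose t0 := Ordinal hk.
have Et : forall t : 'I_k, t = t0.
  by move=> t; apply: val_inj => /=; case: t => [[|m] Hm] //=; move: Hm hk1; case: k {H HL t0} hk => // [[|]].
pose L : array d n n := fun c => Ordinal (ltn_pmod (H (c.1, t0) + c.2) hn).
exists L; split; [split|].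
- move=> x t t' /(congr1 val) /= /eqP.
  rewrite eqn_modDl !modn_small ?ltn_ord // => /eqP E; exact: val_inj.
- move=> i x y t Hxy /(congr1 val) /= /eqP.
  rewrite eqn_modDr !modn_small ?ltn_ord // => /eqP E.
  apply: (HL i x y t0 Hxy); exact: val_inj.
- move=> x t t' E; apply: val_inj => /=.
  rewrite (Et t) -E (Et t) /= addn0 modn_small //.
Qed.

Theorem mainTheorem5 (d n : nat) (hd : 2 <= d) (hn : 1 <= n) :
  (forall H : array d n 1, is_LHC H -> completable H) /\
  (* consequently NC_d(n) >= 2 whenever defined: every k admitting a
     non-completable hypercuboid in LHC(d,n,k) satisfies k >= 2 *)
  (forall k : nat, 1 <= k <= n ->
     (exists H : array d n k, is_LHC H /\ ~ completable H) -> 2 <= k).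
Proof.
split.
  by move=> H; apply: compl_small.
move=> k /andP [hk _] [H [HL HN]].
case: (leqP 2 k) => // hk2.
exfalso; apply: HN; apply: compl_small => //.
Qed.
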